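(* Let $B$ be a ring, $X$ an $m\times n$ matrix of indeterminates, and $\delta=[c_1,\ldots,c_r|d_1,\ldots,d_r]\in\Delta(X)$, with associated $t$ and $\tau_i$ ($1\le i\le t$) as in the context. For every $1\le i\le t$ there exists an integer $1\le N_i\le r$ such that: (1) if $[e_1,\ldots,e_s|f_1,\ldots,f_s]\in\Delta(X;\delta)\setminus\Delta(X;\tau_i)$, then $s\ge N_i$; (2) for every $N_i\le s\le r$, $[c_1,\ldots,c_s|d_1,\ldots,d_s]\in\Delta(X;\delta)\setminus\Delta(X;\tau_i)$.
   Context: Let $B$ be a ring and $X$ an $m\times n$ matrix of indeterminates over $B$. For $1\le r\le\min\{m,n\}$, $1\le a_1<\cdots<a_r\le m$, $1\le b_1<\cdots<b_r\le n$, $[a_1,\ldots,a_r|b_1,\ldots,b_r]$ is the $r$-minor of $X$ with those rows and columns; $\Delta(X)$ is the set of all such minors, ordered by $[a_1,\ldots,a_r|b_1,\ldots,b_r]\le[c_1,\ldots,c_s|d_1,\ldots,d_s]$ iff $r\ge s$ and $a_i\le c_i$, $b_i\le d_i$ for $1\le i\le s$. For $\gamma\in\Delta(X)$, $\Delta(X;\gamma)=\{\xi\in\Delta(X)\mid\xi\ge\gamma\}$. Associated data: Let $N=n+m$. For $\delta=[c_1,\ldots,c_r|d_1,\ldots,d_r]$, let $\tilde\delta=[a_1,\ldots,a_m]$ be the increasing listing of $\{d_1,\ldots,d_r\}\cup\{m+n+1-e\mid e\in\{1,\ldots,m\}\setminus\{c_1,\ldots,c_r\}\}$. To a sequence $1\le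 b_1<\cdots<b_m\le N$ with $[b_1,\ldots,b_m]\ne[n+1,\ldots,n+m]$ associate the minor $[e_1,\ldots,e_s|b_1,\ldots,b_s]\in\Delta(X)$, where $s=\max\{j\mid b_j\le n\}$ and $\{e_1<\cdots<e_s\}=\{1,\ldots,m\}\setminus\{m+n+1-b_j\mid s<j\le m\}$. Blocks of $\tilde\delta$: set $a_{m+1}=N+1$; decompose $\{a_1,\ldots,a_m\}$ into maximal runs of consecutive integers; if $a_m=N$ the run containing $N$ is $\beta_{t+1}$, else $\beta_{t+1}=\emptyset$; the other runs in increasing order are $\beta_0,\ldots,\beta_t$, $\beta_i=\{a_{k(i)+1},\ldots,a_{k(i+1)}\}$, $0=k(0)<\cdots<k(t+1)$. For $1\le i\le t$, $\tilde\tau_i$ is the increasing listing of $(\{a_1,\ldots,a_m\}\setminus\{a_{k(i)}\})\cup\{a_{k(i+1)}+1\}$. If $\tilde\tau_i\ne[n+1,\ldots,n+m]$, $\tau_i\in\Delta(X;\delta)$ is the minor associated to $\tilde\tau_i$; if $\tilde\tau_i=[n+1,\ldots,n+m]$, one sets $\Delta(X;\tau_i)=\emptyset$. *)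

(* Defs.v *)
From mathcomp Require Import all_boot.
Set Implicit Arguments. Unset Strict Implicit. Unset Printing Implicit Defensive.

(* A minor [a_1..a_r | b_1..b_r] of a generic m x n matrix is represented by
   the pair (row indices, column indices), 1-based. *)
Definition minor := (seq nat * seq nat)%type.

Definition is_minor (m n : nat) (xi : minor) : bool :=
  [&& size xi.1 == size xi.2, 0 < size xi.1, size xi.1 <= minn m n,
      sorted ltn xi.1, sorted ltn xi.2,
      all (fun a => 0 < a <= m) xi.1 & all (fun b => 0 < b <= n) xi.2].

Definition minor_le (xi eta : minor) : bool :=
  (size eta.1 <= size xi.1) &&
  all (fun i => (nth 0 xi.1 i <= nth 0 eta.1 i) && (nth 0 xi.2 i <= nth 0 eta.2 i))
      (iota 0 (size eta.1)).

Definition tilde (m n : nat) (delta : minor) : seq nat :=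
  sort leq (delta.2 ++ [seq m + n + 1 - e | e <- iota 1 m & e \notin delta.1]).

(* The minor associated to a sequence b_1 < ... < b_m (b <> [n+1..n+m]). *)
Definition assoc_minor (m n : nat) (b : seq nat) : minor :=
  let s := size [seq x <- b | x <= n] in
  ([seq e <- iota 1 m | e \notin [seq m + n + 1 - x | x <- drop s b]], take s b).

(* Blocks of a = tilde delta, with sentinel a_{m+1} = N+1, N = n+m.
   run_ends = the (1-based) positions j in [1,m] with a_{j+1} <> a_j + 1;
   these are k(1) < ... < k(t+1), the ends of beta_0, ..., beta_t
   (the run containing N, if any, is beta_{t+1} and has no such end). *)
Definition run_ends (m n : nat) (a : seq nat) : seq nat :=
  let ext := rcons a (n + m + 1) in
  [seq j <- iota 1 m | nth 0 ext j != (nth 0 ext j.-1).+1].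

Definition tt (m n : nat) (a : seq nat) : nat := (size (run_ends m n a)).-1.

Definition kk (m n : nat) (a : seq nat) (i : nat) : nat :=
  if i == 0 then 0 else nth 0 (run_ends m n a) i.-1.

Definition aj (a : seq nat) (j : nat) : nat := nth 0 a j.-1.

Definition tau_tilde (m n : nat) (a : seq nat) (i : nat) : seq nat :=
  sort leq (rcons (rem (aj a (kk m n a i)) a) (aj a (kk m n a i.+1)).+1).

(* xi \in Delta(X; tau_i)  (empty if tilde tau_i = [n+1..n+m]) *)
Definition in_Delta_tau (m n : nat) (delta : minor) (i : nat) (xi : minor) : bool :=
  let tt_i := tau_tilde m n (tilde m n delta) i in
  [&& tt_i != iota n.+1 m, is_minor m n xi & minor_le (assoc_minor m n tt_i) xi].

Definition in_diff (m n : nat) (delta : minor) (i : nat) (xi : minor) : bool :=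
  [&& is_minor m n xi, minor_le delta xi & ~~ in_Delta_tau m n delta i xi].

(* Main.v *)
Require Import Defs.
From mathcomp Require Import all_boot zify.
Set Implicit Arguments. Unset Strict Implicit. Unset Printing Implicit Defensive.

Lemma count_split1 (T : eqType) (s : seq T) (x : T) (p : pred T) :
  uniq s -> x \in s -> count p s = count (fun y => p y && (y != x)) s + p x.
Proof.
elim: s => //= y s IH /andP[ys us]; rewrite inE => /orP[/eqP Exy|xs].
- subst y. rewrite eqxx andbF add0n addnC; congr (_ + _).
  apply: eq_in_count => z zs /=. have -> : (z != x) = true.
    by apply/negP => /eqP E; subst z; rewrite zs in ys.
  by rewrite andbT.
- have yx : (y != x) by apply/negP => /eqP E; subst y; rewrite xs in ys.
  rewrite yx andbT (IH us xs); lia.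
Qed.

Lemma cnt_iota (S I : seq nat) (P : pred nat) :
  uniq S -> uniq I -> (forall x, x \in S -> P x -> x \in I) ->
  count P S = count (fun x => P x && (x \in S)) I.
Proof.
move=> uS uI H; rewrite -!size_filter; apply/perm_size/uniq_perm.
- exact: filter_uniq.
- exact: filter_uniq.
move=> x; rewrite !mem_filter; apply/andP/andP => [[Px xS]|[/andP[Px xS] _]]; last by [].
by split; [rewrite Px xS | apply: H].
Qed.

Lemma take_count_sorted (b : seq nat) h : sorted leq b ->
  take (count (fun x => x <= h) b) b = [seq x <- b | x <= h] /\
  drop (count (fun x => x <= h) b) b = [seq x <- b | h < x].
Proof.
elim: b => //= x b IH Hp.
have Sb := path_sorted Hp.
case: (leqP x h) => Hx /=.
- by case: (IH Sb) => E1 E2; rewrite /= E1 E2.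
- have Al := order_path_min leq_trans Hp.
  have E1 : count (fun x0 => x0 <= h) b = 0.
    rewrite (@eq_in_count _ _ pred0) ?count_pred0 // => z zb /=.
    move/allP: Al => /(_ z zb); lia.
  rewrite E1 /=; split.
  + rewrite (@eq_in_filter _ _ pred0) ?filter_pred0 // => z zb /=.
    move/allP: Al => /(_ z zb); lia.
  + rewrite (@eq_in_filter _ _ predT) ?filter_predT // => z zb /=.
    move/allP: Al => /(_ z zb); lia.
Qed.

Lemma sorted_nth_le_h (Y : seq nat) h j : sorted leq Y ->
  j < count (fun x => x <= h) Y -> nth 0 Y j <= h.
Proof.
elim: Y j => //= y Y IH j Hp.
have SY := path_sorted Hp.
case: (leqP y h) => Hy /=.
- case: j => [|j] //=. rewrite add1n ltnS. exact: IH.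
- have Al := order_path_min leq_trans Hp.
  have E1 : count (fun x0 => x0 <= h) Y = 0.
    rewrite (@eq_in_count _ _ pred0) ?count_pred0 // => z zb /=.
    move/allP: Al => /(_ z zb); lia.
  by rewrite E1.
Qed.

Lemma count_le_lem (X Y : seq nat) h : sorted leq Y ->
  (forall j, j < size Y -> nth 0 X j <= nth 0 Y j) ->
  count (fun x => x <= h) Y <= size X ->
  count (fun x => x <= h) Y <= count (fun x => x <= h) X.
Proof.
move=> SY HXY Hq.
set q := count _ Y.
have qY : q <= size Y by exact: count_size.
rewrite -(cat_take_drop q X) count_cat.
have -> : count (fun x => x <= h) (take q X) = q.
  have Sz : size (take q X) = q by rewrite size_takel.
  apply/eqP; rewrite -{2}Sz -all_count; apply/(all_nthP 0) => j.
  rewrite Sz => jq; rewrite nth_take //.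
  apply: leq_trans (HXY j _) _; first by apply: leq_trans jq qY.
  exact: sorted_nth_le_h.
exact: leq_addr.
Qed.

Lemma minor_le_trans (x y z : minor) :
  minor_le x y -> minor_le y z -> minor_le x z.
Proof.
case/andP=> s1 /allP H1 /andP[s2 /allP H2]; apply/andP; split.
  exact: leq_trans s2 s1.
apply/allP => j; rewrite mem_iota add0n => /andP[_ jz].
have /andP[a1 a2] : (nth 0 y.1 j <= nth 0 z.1 j) && (nth 0 y.2 j <= nth 0 z.2 j).
  by apply: H2; rewrite mem_iota add0n jz.
have /andP[b1 b2] : (nth 0 x.1 j <= nth 0 y.1 j) && (nth 0 x.2 j <= nth 0 y.2 j).
  by apply: H1; rewrite mem_iota add0n (leq_trans jz s2).
by rewrite (leq_trans b1 a1) (leq_trans b2 a2).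
Qed.

Lemma minor_le_takes (c d : seq nat) s t : size c = size d -> t <= s <= size c ->
  minor_le (take s c, take s d) (take t c, take t d).
Proof.
move=> Hcd /andP[ts sc]; apply/andP => /=; split.
  by rewrite !size_takel // (leq_trans ts sc).
apply/allP => j; rewrite mem_iota add0n size_takel ?(leq_trans ts sc) // => /andP[_ jt].
have js : j < s by apply: leq_trans jt ts.
by rewrite !nth_take ?leqnn.
Qed.

Lemma is_minor_take m n (c d : seq nat) s : is_minor m n (c, d) -> 0 < s <= size c ->
  is_minor m n (take s c, take s d).
Proof.
case/and5P=> /eqP Hcd H0 H1 Sc /and3P[Sd Ac Ad] /andP[s0 sc] /=.
have sd : s <= size d by rewrite -Hcd.
rewrite /is_minor /= !size_takel // eqxx s0 (leq_trans sc H1) !take_sorted //=.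
apply/andP; split; apply/allP => x /mem_take; [move/allP: Ac|move/allP: Ad]; apply.
Qed.

Lemma memG m n (c : seq nat) x :
  (x \in [seq m + n + 1 - e | e <- iota 1 m & e \notin c]) =
  [&& n < x, x <= m + n & m + n + 1 - x \notin c].
Proof.
apply/mapP/idP.
- case=> e; rewrite mem_filter mem_iota => /andP[ec /andP[e1 e2]] ->.
  have -> : m + n + 1 - (m + n + 1 - e) = e by lia.
  rewrite ec andbT; apply/andP; split; lia.
- case/and3P=> x1 x2 xc; exists (m + n + 1 - x); last by lia.
  rewrite mem_filter xc mem_iota /=; apply/andP; split; lia.
Qed.

Lemma sub_in_count (T : eqType) (s : seq T) (a1 a2 : pred T) :
  (forall x, x \in s -> a1 x -> a2 x) -> count a1 s <= count a2 s.
Proof.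
elim: s => //= x s IH H.
apply: leq_add; last by apply: IH => y ys; apply: H; rewrite inE ys orbT.
by case E: (a1 x) => //=; rewrite (H x (mem_head x s) E).
Qed.

Lemma key m n (c d : seq nat) i : is_minor m n (c, d) ->
  1 <= i <= tt m n (tilde m n (c, d)) ->
  ~~ minor_le (assoc_minor m n (tau_tilde m n (tilde m n (c, d)) i)) (c, d).
Proof.
move=> Hm /andP[]; case: i => [|j] // _ Hi2; move: Hm.
case/and5P=> /eqP /= Hcd /= Hr0 /= Hrmn /= Sc /and3P[/= Sd /allP /= Ac /allP /= Ad].
have uc : uniq c by move: Sc; rewrite ltn_sorted_uniq_leq => /andP[].
have ud : uniq d by move: Sd; rewrite ltn_sorted_uniq_leq => /andP[].
have Sc' : sorted leq c by move: Sc; rewrite ltn_sorted_uniq_leq => /andP[].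
have Sd' : sorted leq d by move: Sd; rewrite ltn_sorted_uniq_leq => /andP[].
set a := tilde m n (c, d).
set G := [seq m + n + 1 - e | e <- iota 1 m & e \notin c].
have mema : forall x, (x \in a) = (x \in d) || [&& n < x, x <= m + n & m + n + 1 - x \notin c].
  by move=> x; rewrite /a /tilde mem_sort mem_cat memG.
have rc : size c <= m by move: Hrmn; rewrite leq_min => /andP[].
have cI : forall x, x \in c -> x \in iota 1 m.
  by move=> x /Ac; rewrite mem_iota; lia.
have cnt_c : count (mem c) (iota 1 m) = size c.
  rewrite -(count_predT c) (@cnt_iota c (iota 1 m) predT) ?iota_uniq //.
  by move=> x xc _; apply: cI.
have sza : size a = m.
  rewrite /a /tilde size_sort size_cat size_map size_filter -Hcd.
  have := count_predC (mem c) (iota 1 m); rewrite size_iota cnt_c.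
  change (count (predC (mem c)) (iota 1 m)) with (count (fun e => e \notin c) (iota 1 m)).
  by [].
have ua : uniq a.
  rewrite /a /tilde sort_uniq cat_uniq ud /=; apply/andP; split.
    apply/hasPn => x /mapP[e]; rewrite mem_filter mem_iota => /andP[_ He] -> /=.
    apply/negP => /Ad; lia.
  rewrite map_inj_in_uniq ?filter_uniq ?iota_uniq //.
  move=> x y; rewrite !mem_filter !mem_iota => /andP[_ Hx] /andP[_ Hy]; lia.
have Sa' : sorted leq a by rewrite /a /tilde; apply: sort_sorted; exact: leq_total.
have Sa : sorted ltn a by rewrite ltn_sorted_uniq_leq ua Sa'.
have arange : forall x, x \in a -> 0 < x <= m + n.
  move=> x; rewrite mema => /orP[/Ad|/and3P[]]; lia.
set RE := run_ends m n a.
have Hi : j < (size RE).-1 by move: Hi2; rewrite /tt -/RE.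
have Hi' : j.+1 < size RE by move: Hi; case: (size RE).
have Hij : j < size RE by apply: ltnW.
set k := nth 0 RE j.
set k' := nth 0 RE j.+1.
have SRE : sorted ltn RE by apply: sorted_filter; [exact: ltn_trans| exact: iota_ltn_sorted].
have kRE : k \in RE by apply: mem_nth.
have k'RE : k' \in RE by apply: mem_nth.
have kk' : k < k' by apply: (sorted_ltn_nth ltn_trans 0 SRE).
have k'r : 1 <= k' <= m by move: k'RE; rewrite mem_filter mem_iota => /andP[_]; rewrite add1n ltnS.
have kr : 1 <= k by move: kRE; rewrite mem_filter mem_iota => /andP[_] /andP[].
have k'end : nth 0 (rcons a (n + m + 1)) k' != (nth 0 (rcons a (n + m + 1)) k'.-1).+1.
  by move: k'RE; rewrite mem_filter => /andP[].
have Ekk : kk m n a j.+1 = k by [].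
have Ekk' : kk m n a j.+2 = k' by [].
set tau := tau_tilde m n a j.+1.
have Etau : tau = sort leq (rcons (rem (nth 0 a k.-1) a) (nth 0 a k'.-1).+1) by [].
clearbody tau k k' RE a.
set ak := nth 0 a k.-1.
set ak' := nth 0 a k'.-1.
have Eak : nth 0 a k.-1 = ak by [].
have Eak' : nth 0 a k'.-1 = ak' by [].
have i1 : k.-1 < k'.-1 by clear -kr kk'; lia.
have i2 : k'.-1 < m by clear -k'r; lia.
have i3 : k.-1 < m by clear -i1 i2; lia.
have akk' : ak < ak'.
  by apply: (sorted_ltn_nth ltn_trans 0 Sa); rewrite ?inE /= ?sza.
have aka : ak \in a by apply: mem_nth; rewrite sza.
have ak'a : ak' \in a by apply: mem_nth; rewrite sza.
rewrite Eak Eak' in Etau.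
clearbody ak ak'.
move: k'end; rewrite !nth_rcons sza i2 Eak' => k'end.
have [ak'N ak'na] : ak' < m + n /\ ak'.+1 \notin a.
  have Hb : k' < m -> ak'.+1 < nth 0 a k'.
    move=> k'm; move: k'end; rewrite k'm => ne.
    have lt : ak' < nth 0 a k'.
      rewrite -Eak'; apply: (sorted_ltn_nth ltn_trans 0 Sa); rewrite ?inE /= ?sza //.
      by clear -k'r; lia.
    by clear -ne lt; lia.
  split.
  - case: (ltnP k' m) => Hk.
      have := Hb Hk; have := arange (nth 0 a k'); rewrite mem_nth ?sza //.
      by move=> /(_ isT) H1 H2; clear -H1 H2; lia.
    have Ek : k' = m by clear -Hk k'r; lia.
    move: k'end; rewrite Ek ltnn eqxx => /eqP H.
    have := arange _ ak'a; clear -H; lia.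
  - apply/negP => Hin.
    have ji := index_mem (ak'.+1) a; rewrite Hin sza in ji.
    have Ej := nth_index 0 Hin.
    case: (leqP (index ak'.+1 a) k'.-1) => Hj.
      have : nth 0 a (index ak'.+1 a) <= nth 0 a k'.-1.
        by apply: (sorted_leq_nth leq_trans leqnn 0 Sa'); rewrite ?inE /= ?sza.
      rewrite Ej Eak'; clear; lia.
    have Hk : k' < m by clear -Hj ji; lia.
    have : nth 0 a k' <= nth 0 a (index ak'.+1 a).
      apply: (sorted_leq_nth leq_trans leqnn 0 Sa'); rewrite ?inE /= ?sza //.
      by clear -Hj k'r; lia.
    have := Hb Hk; rewrite Ej; clear; lia.
have memt : forall x, (x \in tau) = (x == ak'.+1) || ((x != ak) && (x \in a)).
  by move=> x; rewrite Etau mem_sort mem_rcons inE mem_rem_uniq.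
have ut : uniq tau.
  rewrite Etau sort_uniq rcons_uniq rem_uniq // andbT.
  by apply/negP => /mem_rem; rewrite (negbTE ak'na).
have St : sorted leq tau by rewrite Etau; apply: sort_sorted; exact: leq_total.
have trange : forall x, x \in tau -> 0 < x <= m + n.
  move=> x; rewrite memt => /orP[/eqP ->|/andP[_ /arange]] //.
rewrite /assoc_minor size_filter.
set s := count (fun x => x <= n) tau.
have [Etake Edrop] := take_count_sorted n St.
rewrite -/s in Etake Edrop.
apply/negP => /andP[/= Hsz /allP Hall].
case: (ltnP ak' n) => Hak'.
-
  have Hcol : forall j, j < size d -> nth 0 (take s tau) j <= nth 0 d j.
    move=> j0 jd; have := Hall j0; rewrite mem_iota add0n Hcd jd => /(_ isT) /andP[_ ->] //.
  have Hle := @count_le_lem (take s tau) d ak Sd' Hcol.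
  have dI : forall x, x \in d -> x \in iota 1 n.
    by move=> x /Ad; rewrite mem_iota => H; clear -H; lia.
  have E1 : count (fun x => x <= ak) d = count (fun e => (e <= ak) && (e \in d)) (iota 1 n).
    by apply: cnt_iota; rewrite ?iota_uniq // => x xd _; apply: dI.
  have akd : ak \in d.
    move: aka; rewrite mema => /orP[] // /and3P[H _ _].
    by clear -H akk' Hak'; lia.
  have E2 := @count_split1 _ (iota 1 n) ak (fun e => (e <= ak) && (e \in d)) (iota_uniq _ _) (dI _ akd).
  rewrite /= leqnn akd /= in E2.
  have E3 : s = count (fun e => (e <= n) && (e \in tau)) (iota 1 n).
    apply: cnt_iota; rewrite ?iota_uniq // => x xt xn; rewrite mem_iota.
    by have := trange _ xt; clear -xn; lia.
  have ak't : ak'.+1 \in tau by rewrite memt eqxx.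
  have ak'I : ak'.+1 \in iota 1 n by rewrite mem_iota; clear -Hak'; lia.
  have E4 := @count_split1 _ (iota 1 n) ak'.+1 (fun e => (e <= n) && (e \in tau)) (iota_uniq _ _) ak'I.
  rewrite /= Hak' ak't /= in E4.
  have sub1 : count (fun y => ((y <= ak) && (y \in d)) && (y != ak)) (iota 1 n) <=
              count (fun y => ((y <= n) && (y \in tau)) && (y != ak'.+1)) (iota 1 n).
    apply: sub_count => y /= /andP[/andP[ya yd] yak].
    have yn : y <= n by move: yd => /Ad; clear; lia.
    have yt : y \in tau by rewrite memt yak mema yd orbT.
    have ya1 : y != ak'.+1 by apply/eqP => E; clear -E ya akk'; lia.
    by rewrite yn yt ya1.
  have szt : size (take s tau) = s by rewrite size_takel // count_size.
  have Hq : count (fun x => x <= ak) d <= size (take s tau).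
    by rewrite szt E3 E1 E2 E4 leq_add2r.
  have Hle' := Hle Hq.
  rewrite Etake count_filter E1 in Hle'.
  have E5 : count (predI (fun x => x <= ak) (fun x => x <= n)) tau =
            count (fun e => ((e <= ak) && (e <= n)) && (e \in tau)) (iota 1 n).
    apply: cnt_iota; rewrite ?iota_uniq // => x xt /= /andP[_ xn].
    by rewrite mem_iota; have := trange _ xt; clear -xn; lia.
  have sub2 : count (fun e => ((e <= ak) && (e <= n)) && (e \in tau)) (iota 1 n) <=
              count (fun y => ((y <= ak) && (y \in d)) && (y != ak)) (iota 1 n).
    apply: sub_count => y /= /andP[/andP[ya yn]]; rewrite memt => /orP[/eqP E|/andP[yak ya']].
      by clear -E ya akk'; lia.
    rewrite ya yak andbT /=; move: ya'; rewrite mema => /orP[] // /and3P[H _ _].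
    by clear -H yn; lia.
  by rewrite E5 E2 in Hle'; have := leq_trans Hle' sub2; rewrite addn1 ltnn.
-
  set e0 := m + n - ak'.
  have Ee0 : m + n + 1 - ak'.+1 = e0 by rewrite /e0; clear; lia.
  have e0I : e0 \in iota 1 m by rewrite mem_iota /e0; clear -Hak' ak'N; lia.
  clearbody e0.
  have e0c : e0 \in c.
    apply/idPn => He; move/negP: ak'na; apply; rewrite mema; apply/orP; right.
    rewrite Ee0 He andbT; apply/andP; split; clear -Hak' ak'N; lia.
  set D := [seq m + n + 1 - x | x <- drop s tau].
  have Hrow : forall j, j < size c -> nth 0 [seq e <- iota 1 m | e \notin D] j <= nth 0 c j.
    move=> j0 jd; have := Hall j0; rewrite mem_iota add0n jd => /(_ isT) /andP[-> _] //.
  have Hle := @count_le_lem _ c e0 Sc' Hrow (leq_trans (count_size _ _) Hsz).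
  rewrite count_filter in Hle.
  have E1 : count (fun x => x <= e0) c = count (fun e => (e <= e0) && (e \in c)) (iota 1 m).
    by apply: cnt_iota; rewrite ?iota_uniq // => x xc _; apply: cI.
  have E2 := @count_split1 _ (iota 1 m) e0 (fun e => (e <= e0) && (e \in c)) (iota_uniq _ _) e0I.
  rewrite /= leqnn e0c /= in E2.
  have inD : forall x, x \in tau -> n < x -> m + n + 1 - x \in D.
    by move=> x xt xn; apply: map_f; rewrite Edrop mem_filter xn.
  have sub1 : count (predI (fun x => x <= e0) (fun e => e \notin D)) (iota 1 m) <=
              count (fun y => ((y <= e0) && (y \in c)) && (y != e0)) (iota 1 m).
    apply: sub_in_count => y; rewrite mem_iota => yI' /andP[ye yD].
    have yI : 0 < y <= m by clear -yI'; lia.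
    have ne0 : y != e0.
      apply/eqP => E; move/negP: yD; apply; rewrite E -Ee0.
      by apply: inD; [rewrite memt eqxx | clear -Hak'; lia].
    rewrite ye ne0 andbT /=.
    apply/idPn => yc; move/negP: yD; apply.
    have -> : y = m + n + 1 - (m + n + 1 - y) by clear -yI; lia.
    apply: inD; last by clear -yI; lia.
    rewrite memt mema; apply/orP; right; apply/andP; split.
      by apply/eqP => E; clear -E ye Ee0 ak'N akk' yI; lia.
    apply/orP; right.
    have -> : m + n + 1 - (m + n + 1 - y) = y by clear -yI; lia.
    rewrite yc andbT; apply/andP; split; clear -yI; lia.
  rewrite E1 E2 in Hle; have := leq_trans Hle sub1; rewrite addn1 ltnn.
  done.
Qed.
Theorem lemma4p7 (m n : nat) (c d : seq nat) :
  is_minor m n (c, d) ->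
  forall i : nat, 1 <= i <= tt m n (tilde m n (c, d)) ->
  exists Ni : nat,
    [/\ 1 <= Ni <= size c,
        (forall e f : seq nat, in_diff m n (c, d) i (e, f) -> Ni <= size e)
      & (forall s : nat, Ni <= s <= size c ->
           in_diff m n (c, d) i (take s c, take s d))].
Proof.
move=> Hm i Hi.
have Key := key Hm Hi.
have Hcd : size c = size d by case/and5P: Hm => /eqP.
have Hr0 : 0 < size c by case/and5P: Hm.
set P := fun s => (0 < s) && in_diff m n (c, d) i (take s c, take s d).
have Pr : P (size c).
  rewrite /P Hr0 /= !take_size Hcd take_size /in_diff Hm /=.
  have -> : minor_le (c, d) (c, d).
    have := @minor_le_takes c d (size c) (size c) Hcd; rewrite leqnn !take_size Hcd take_size.
    by apply.
  rewrite /=; apply/negP => /and3P[_ _ H]; by rewrite H in Key.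
have exP : exists s, P s by exists (size c).
case: (ex_minnP exP) => Ni /andP[Ni0 HNi] Hmin.
have Nic : Ni <= size c by apply: Hmin.
have mtake : forall s, 0 < s <= size c -> minor_le (c, d) (take s c, take s d).
  move=> s /andP[_ sc].
  have := @minor_le_takes c d (size c) s Hcd; rewrite sc leqnn !take_size Hcd take_size.
  by apply.
exists Ni; split.
- by rewrite Ni0.
- move=> e f /and3P[He Hle Hnt]; rewrite leqNgt; apply/negP => Hlt.
  set s := size e.
  have s0 : 0 < s by case/and5P: He.
  have sc : s <= size c by case/andP: Hle.
  have nPs : ~~ P s by apply/negP => /Hmin; rewrite leqNgt Hlt.
  have Hs : in_Delta_tau m n (c, d) i (take s c, take s d).
    move: nPs; rewrite /P s0 /in_diff is_minor_take ?s0 ?sc // mtake ?s0 ?sc //=.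
    by rewrite negbK.
  case/and3P: Hs => Hf _ HT.
  move/negP: Hnt; apply; rewrite /in_Delta_tau Hf He /=.
  apply: minor_le_trans HT _.
  case/andP: Hle => _ /allP Hall; apply/andP; split; first by rewrite /= size_takel.
  apply/allP => j; rewrite mem_iota add0n => /andP[_ js] /=.
  rewrite !nth_take //; apply: Hall; rewrite mem_iota add0n; exact: js.
- move=> s /andP[Ns sc].
  have s0 : 0 < s by apply: leq_trans Ni0 Ns.
  rewrite /in_diff is_minor_take ?s0 ?sc // mtake ?s0 ?sc //=.
  apply/negP => /and3P[Hf _ HT].
  move: HNi; rewrite /in_diff => /and3P[HmN _ /negP]; apply.
  rewrite /in_Delta_tau Hf HmN /=.
  apply: minor_le_trans HT _; apply: minor_le_takes => //; by rewrite Ns sc.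
Qed.
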